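(* Let $n\geq 3$ and $m\in\{1,\ldots,n\}$ be integers. Then the community code $C_{n,m}\subseteq\mathbb{F}_2^{N}$, $N=\binom{n}{2}$, is not a linear code (i.e., it is not an $\mathbb{F}_2$-linear subspace of $\mathbb{F}_2^N$).
   Context: For integers $n\geq 2$, $N=\binom{n}{2}$ and $1\leq m\leq n$, the community code $C_{n,m}\subseteq\mathbb{F}_2^N$ consists of exactly those binary vectors of length $N$ that are the upper-triangular (off-diagonal) part of the adjacency matrix of a simple undirected graph on the labeled vertex set $\{1,\ldots,n\}$ which is a disjoint union of cliques, each clique having at least $m$ vertices. (Equivalently, codewords correspond to partitions of $\{1,\ldots,n\}$ into parts of size at least $m$, where two vertices are adjacent iff they lie in the same part.) *)

(* Defs.v *)
From HB Require Import structures.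
From mathcomp Require Import all_boot all_order all_algebra.
Set Implicit Arguments. Unset Strict Implicit. Unset Printing Implicit Defensive.
Import GRing.Theory.
Local Open Scope ring_scope.

(* Coordinates of F_2^N, N = 'C(n,2): unordered pairs {i,j} of vertices of
   {0..n-1}, represented as ordered pairs (i,j) with i < j. *)
Definition vpair (n : nat) := {p : 'I_n * 'I_n | (p.1 < p.2)%N}.

Notation F2vec n := {ffun vpair n -> ('F_2)^o}.

(* The codeword (upper-triangular part of the adjacency matrix) of the
   disjoint union of cliques given by a partition P of the vertex set. *)
Definition part_word (n : nat) (P : {set {set 'I_n}}) : F2vec n :=
  [ffun p : vpair n =>
     ([exists B in P, ((val p).1 \in B) && ((val p).2 \in B)] : bool)%:R].

Definition community_code (n m : nat) : F2vec n -> Prop :=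
  fun x => exists P : {set {set 'I_n}},
    [/\ partition P [set: 'I_n], (forall B, B \in P -> (m <= #|B|)%N)
      & x = part_word P].

Definition is_linear_code (R : pzRingType) (V : lmodType R) (C : V -> Prop) : Prop :=
  C 0 /\ forall (a : R) (x y : V), C x -> C y -> C (a *: x + y).

(* Main.v *)
Require Import Defs.
From mathcomp Require Import all_boot all_order all_algebra.
Set Implicit Arguments. Unset Strict Implicit. Unset Printing Implicit Defensive.
Import GRing.Theory.
Local Open Scope ring_scope.

Lemma pw_at n (P : {set {set 'I_n}}) (i j : 'I_n) (h : (i < j)%N) :
  part_word P (exist _ (i, j) h) =
  ([exists B in P, (i \in B) && (j \in B)] : bool)%:R.
Proof. by rewrite ffunE. Qed.

Lemma F2_10 : ((1 : ('F_2)^o) == 0) = false. Proof. by []. Qed.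

Lemma bool_F2 (b : bool) : ((b%:R : ('F_2)^o) = 1) -> b.
Proof. by case: b => //= H; move: F2_10; rewrite -H eqxx. Qed.

Lemma bool_F2' (b : bool) : ((b%:R : ('F_2)^o) = 0) -> ~~ b.
Proof. by case: b => //= H; move: F2_10; rewrite H eqxx. Qed.

Lemma preim_word n (T : eqType) (f : 'I_n -> T) (i j : 'I_n) (h : (i < j)%N) :
  part_word (preim_partition f [set: 'I_n]) (exist _ (i, j) h) = (f i == f j)%:R.
Proof.
rewrite pw_at; congr (_%:R).
congr (nat_of_bool _); apply/idP/idP.
- case/existsP=> B /andP[/imsetP[x _ ->]]; rewrite !inE => /andP[/eqP <- /eqP <-].
  by [].
- move=> e; apply/existsP; exists [set y in [set: 'I_n] | f i == f y].
  by rewrite (imset_f (fun x => [set y in [set: 'I_n] | f x == f y])) ?inE ?eqxx.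
Qed.

Lemma preim_in_code n m (T : eqType) (f : 'I_n -> T) : (m <= 1)%N ->
  @community_code n m (part_word (preim_partition f [set: 'I_n])).
Proof.
move=> hm; exists (preim_partition f [set: 'I_n]); split => //.
- exact: preim_partitionP.
- move=> B /imsetP[x _ ->]; apply: leq_trans hm _.
  by rewrite card_gt0; apply/set0Pn; exists x; rewrite !inE eqxx.
Qed.

Lemma addZ1 n (x y : F2vec n) p : (1 *: x + y) p = x p + y p.
Proof. by rewrite !ffunE scale1r. Qed.

Theorem lemma2 (n m : nat) :
  (3 <= n)%N -> (1 <= m <= n)%N ->
  ~ is_linear_code (@community_code n m).
Proof.
move=> hn /andP[hm1 hmn] [C0 Clin].
have h0 : (0 < n)%N by apply: leq_trans hn.
have h1 : (1 < n)%N by apply: leq_trans hn.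
have h2 : (2 < n)%N by [].
pose o0 := Ordinal h0; pose o1 := Ordinal h1; pose o2 := Ordinal h2.
case: (leqP m 1) => hm.
- pose w1 := part_word (preim_partition (fun _ : 'I_n => 0%N) [set: 'I_n]).
  pose w2 := part_word (preim_partition (fun i : 'I_n => (i <= 1)%N) [set: 'I_n]).
  have [P [hP _ hx]] := Clin 1 w1 w2 (preim_in_code _ hm) (preim_in_code _ hm).
  have e02 : (o0 < o2)%N by []. have e12 : (o1 < o2)%N by [].
  have e01 : (o0 < o1)%N by [].
  have vv : forall p, w1 p + w2 p = part_word P p.
    by move=> p; rewrite -hx addZ1.
  have v02 := vv (exist _ (o0, o2) e02).
  have v12 := vv (exist _ (o1, o2) e12).
  have v01 := vv (exist _ (o0, o1) e01).
  rewrite /w1 /w2 !preim_word !pw_at /= in v02 v12 v01.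
  rewrite addr0 in v02 v12.
  have /existsP[B /andP[BP /andP[i0 i2]]] := bool_F2 (esym v02).
  have /existsP[B' /andP[B'P /andP[i1 i2']]] := bool_F2 (esym v12).
  move: v01.
  have tP : trivIset P by case/and3P: hP.
  have EB : B = B' by rewrite -(def_pblock tP BP i2) (def_pblock tP B'P i2').
  subst B'.
  have -> : [exists B in P, (o0 \in B) && (o1 \in B)].
    by apply/existsP; exists B; rewrite BP i0 i1.
  by move/eqP.
- case: C0 => P [hP hsz hx].
  have cov : o0 \in cover P by case/and3P: hP => /eqP -> _ _; rewrite inE.
  have BP := pblock_mem cov.
  have := hsz _ BP; rewrite (cardsD1 o0) mem_pblock cov add1n => hc.
  have : (0 < #|pblock P o0 :\ o0|)%N by rewrite -ltnS (leq_trans hm hc).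
  rewrite card_gt0; case/set0Pn => j; rewrite in_setD1 => /andP[jn0 jB].
  have ej : (o0 < j)%N by rewrite lt0n; apply: contra jn0 => /eqP e; apply/eqP/val_inj.
  have := congr1 (fun x : F2vec n => x (exist _ (o0, j) ej)) hx.
  rewrite /= ffunE pw_at /= => /esym/bool_F2'/existsP; apply.
  by exists (pblock P o0); rewrite BP mem_pblock cov jB.
Qed.
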